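(* Let $V$ be a smooth $A[G]$-module and $0<r\le s$ (allowing $s=\infty$). Then the inclusion $V^{U_1(\varpi^r)}\subset V^{U_1(\varpi^s)}$ is $A[X]$-linear, where $X_j$ acts by $U^{(j)}$ on both sides. Moreover, if $V$ is $A$-torsion free, then so is the quotient $V^{U_1(\varpi^s)}/V^{U_1(\varpi^r)}$.
   Context: Let $F/\mathbb{Q}_p$ be finite with ring of integers $\mathcal{O}_F$, uniformizer $\varpi$, residue field $k_F$; let $K/\mathbb{Q}_\ell$ ($\ell\ne p$) be finite with ring of integers $\mathcal{O}$, maximal ideal $\lambda$, residue field $k$; $G=\mathrm{GL}_n(F)$, and assume $\ell\nmid\#\mathrm{GL}_n(k_F)$. $A$ is an $\mathcal{O}$-algebra; smooth $A[G]$-modules are those equal to the union of their invariants under compact open subgroups. For $1\le r<\infty$, the mirahoric subgroup $U_1(\varpi^r)$ consists of $u\in\mathrm{GL}_n(\mathcal{O}_F)$ whose last row is congruent to $(0,\dots,0,1)$ mod $\varpi^r$; $U_1(\varpi^\infty)=P(\mathcal{O}_F)$ is the intersection of all of them, $P$ being the mirabolic subgroup (last row $(0,\dots,0,1)$). For $j=1,\dots,n-1$ let $\alpha_j=\mathrm{diag}(\varpi 1_j,1_{n-j})$ and let $U^{(j)}$ be the double coset operator $[U_1(\varpi^r)\alpha_jU_1(\varpi^r)]$ acting on $V^{U_1(\varpi^r)}$ by $x\mapsto\sum_{\beta}\beta x$, $\beta$ running over $U_1(\varpi^r)\alpha_jU_1(\varpi^r)/U_1(\varpi^r)$. These operators commute,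 so $V^{U_1(\varpi^r)}$ is a module over $A[X]=A[X_1,\dots,X_{n-1}]$ with $X_j\mapsto U^{(j)}$. An $A$-module $M$ is $A$-torsion free if $am=0$ with $a\in A$, $m\in M$ implies $m=0$ or $a$ is a zero-divisor of $A$. *)

(* Defs.v *)
From HB Require Import structures.
From mathcomp Require Import all_boot all_order all_algebra.
Set Implicit Arguments. Unset Strict Implicit. Unset Printing Implicit Defensive.
Import Order.TTheory GRing.Theory Num.Theory.
Local Open Scope ring_scope.

(* p-adic fields: a field F with a normalized discrete valuation      *)
(* [v] (v x is meaningful for x <> 0), complete, of characteristic 0, *)
(* whose residue characteristic is the prime p.  Together with the    *)
(* finiteness of the residue field (see [residue_card]) this          *)
(* characterizes the finite extensions of Q_p.                        *)

Section Valued.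
Variable (F : fieldType) (v : F -> int).

Definition integral (x : F) : bool := (x == 0) || (0 <= v x).

Definition congr_mod (r : nat) (x y : F) : bool :=
  (x - y == 0) || (r%:Z <= v (x - y)).

Definition cauchy_seq (u : nat -> F) : Prop :=
  forall N : nat, exists M : nat, forall m k : nat,
    (M <= m)%N -> (M <= k)%N -> congr_mod N (u m) (u k).

Definition converges_to (u : nat -> F) (L : F) : Prop :=
  forall N : nat, exists M : nat, forall m : nat, (M <= m)%N -> congr_mod N (u m) L.

End Valued.

Record padic_valuation (p : nat) (F : fieldType) (v : F -> int) : Prop := {
  pv_prime : prime p;
  pv_mul : forall x y : F, x != 0 -> y != 0 -> v (x * y) = v x + v y;
  pv_add : forall x y : F, x != 0 -> y != 0 -> x + y != 0 ->
             Num.min (v x) (v y) <= v (x + y);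
  pv_surj : forall z : int, exists x : F, x != 0 /\ v x = z;
  pv_char0 : [pchar F] =i pred0;
  pv_residue_char : (p%:R : F) != 0 /\ 0 < v (p%:R);
  pv_complete : forall u : nat -> F, cauchy_seq v u -> exists L, converges_to v u L
}.

(* The residue field O_F / varpi O_F has exactly q elements. *)
Definition residue_card (F : fieldType) (v : F -> int) (q : nat) : Prop :=
  exists s : seq F, [/\ size s = q, all (integral v) s,
    (forall i k, (i < q)%N -> (k < q)%N -> i <> k -> ~~ congr_mod v 1 (nth 0 s i) (nth 0 s k))
  & (forall x, integral v x -> exists2 y, y \in s & congr_mod v 1 x y)].

Definition gl_order (n q : nat) : nat := (\prod_(i < n) (q ^ n - q ^ i))%N.

Section Groups.
Variables (F : fieldType) (v : F -> int) (n : nat).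

Definition GLn (g : 'M[F]_n) : bool := g \in unitmx.

Definition GLnO (g : 'M[F]_n) : bool :=
  [forall i, forall j, integral v (g i j)] && (\det g != 0) && (v (\det g) == 0).

Definition princ_cong (m : nat) (g : 'M[F]_n) : bool :=
  GLnO g && [forall i, forall j, congr_mod v m (g i j) (if i == j then 1 else 0)].

(* Levels 1 <= r <= infinity: [Some r] is r, [None] is infinity. *)
Definition U1 (lvl : option nat) (g : 'M[F]_n) : bool :=
  GLnO g && [forall i : 'I_n, forall j : 'I_n, (i.+1 == n) ==>
    match lvl with
    | Some r => congr_mod v r (g i j) ((j.+1 == n)%:R)
    | None => g i j == (j.+1 == n)%:R
    end].

Definition alpha (w : F) (j : nat) : 'M[F]_n :=
  diag_mx (\row_(i < n) (if (i < j)%N then w else 1)).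

Definition in_dcoset (U : pred 'M[F]_n) (a g : 'M[F]_n) : Prop :=
  exists u1 u2, U u1 /\ U u2 /\ g = u1 *m a *m u2.

(* bs is a (finite, repetition-free) system of representatives of U a U / U *)
Definition dcoset_reps (U : pred 'M[F]_n) (a : 'M[F]_n) (bs : seq 'M[F]_n) : Prop :=
  [/\ forall b, b \in bs -> in_dcoset U a b,
      forall g, in_dcoset U a g -> exists2 b, b \in bs & U (invmx b *m g)
    & forall i k, (i < size bs)%N -> (k < size bs)%N -> i <> k ->
        ~ U (invmx (nth 0 bs i) *m nth 0 bs k)].

End Groups.

Section Reps.
Variables (F : fieldType) (v : F -> int) (n : nat) (A : comPzRingType) (V : lmodType A).
Variable rho : 'M[F]_n -> V -> V.

Definition is_rep : Prop :=
  [/\ forall g, GLn g -> forall (a : A) (x y : V), rho g (a *: x + y) = a *: rho g x + rho g y,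
      forall x, rho 1%:M x = x
    & forall g h, GLn g -> GLn h -> forall x, rho (g *m h) x = rho g (rho h x)].

Definition fixed_by (U : pred 'M[F]_n) (x : V) : Prop := forall g, U g -> rho g x = x.

(* smooth: every vector is fixed by some compact open subgroup; the
   principal congruence subgroups form a basis of such subgroups *)
Definition smooth : Prop := forall x : V, exists m : nat, fixed_by (princ_cong v m) x.

Definition hecke (bs : seq 'M[F]_n) (x : V) : V := \sum_(b <- bs) rho b x.

End Reps.

Definition zero_divisor (A : comPzRingType) (a : A) : Prop := exists b : A, b != 0 /\ a * b = 0.

Definition torsion_free (A : comPzRingType) (V : lmodType A) : Prop :=
  forall (a : A) (x : V), a *: x = 0 -> x = 0 \/ zero_divisor a.

(* A is an O-algebra, O = ring of integers of (K, vK): phi restricted to O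
   is a unital ring homomorphism O -> A *)
Definition O_algebra_map (K : fieldType) (vK : K -> int) (A : comPzRingType) (phi : K -> A) : Prop :=
  [/\ phi 1 = 1,
      forall x y, integral vK x -> integral vK y -> phi (x + y) = phi x + phi y
    & forall x y, integral vK x -> integral vK y -> phi (x * y) = phi x * phi y].

(* Main.v *)
Require Import Defs.
From HB Require Import structures.
From mathcomp Require Import all_boot all_order all_algebra.
From Stdlib Require Import Classical.
Import Order.TTheory GRing.Theory Num.Theory.
Local Open Scope ring_scope.
Set Implicit Arguments. Unset Strict Implicit.

Definition Iv (F : fieldType) (v : F -> int) (lvl : option nat) (z : F) : bool :=
  match lvl with Some r => (z == 0) || (r%:Z <= v z) | None => z == 0 end.

Lemma v1 p (F : fieldType) (v : F -> int) : padic_valuation p v -> v 1 = 0.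
Proof.
move=> hv; have := pv_mul hv (oner_neq0 F) (oner_neq0 F).
rewrite mulr1 => /(congr1 (fun z => z - v 1)); rewrite subrr addrK => //.
Qed.

Lemma vN1 p (F : fieldType) (v : F -> int) : padic_valuation p v -> v (-1) = 0.
Proof.
move=> hv; have h1 : (-1 : F) != 0 by rewrite oppr_eq0 oner_neq0.
have := pv_mul hv h1 h1; rewrite mulrNN mulr1 (v1 hv).
move=> h; have : (v (-1)) * 2%:R = 0 by rewrite mulr_natr mulr2n -h.
by move/eqP; rewrite mulf_eq0 pnatr_eq0 orbF => /eqP.
Qed.

Lemma vN p (F : fieldType) (v : F -> int) x : padic_valuation p v -> v (- x) = v x.
Proof.
move=> hv; have [->|x0] := eqVneq x 0; first by rewrite oppr0.
have h1 : (-1 : F) != 0 by rewrite oppr_eq0 oner_neq0.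
by rewrite -mulN1r (pv_mul hv h1 x0) (vN1 hv) add0r.
Qed.

Lemma Iv0 (F : fieldType) (v : F -> int) lvl : Iv v lvl 0.
Proof. by case: lvl => [r|] /=; rewrite eqxx. Qed.

Lemma IvD p (F : fieldType) (v : F -> int) lvl x y : padic_valuation p v ->
  Iv v lvl x -> Iv v lvl y -> Iv v lvl (x + y).
Proof.
move=> hv; case: lvl => [r|] /=; last by move=> /eqP-> /eqP->; rewrite addr0.
have [->|x0] := eqVneq x 0; first by rewrite add0r.
have [->|y0] := eqVneq y 0; first by rewrite addr0 => /= h _; rewrite h orbT.
have [->|s0] := eqVneq (x + y) 0; first by [].
move=> /= hx hy; apply: le_trans (pv_add hv x0 y0 s0).
by rewrite le_min hx hy.
Qed.

Lemma IvN p (F : fieldType) (v : F -> int) lvl x : padic_valuation p v ->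
  Iv v lvl x -> Iv v lvl (- x).
Proof. by move=> hv; case: lvl => [r|] /=; rewrite oppr_eq0 ?(vN _ hv). Qed.

Lemma IvB p (F : fieldType) (v : F -> int) lvl x y : padic_valuation p v ->
  Iv v lvl x -> Iv v lvl y -> Iv v lvl (x - y).
Proof. by move=> hv hx hy; apply: IvD hv hx (IvN hv hy). Qed.

Lemma integralE (F : fieldType) (v : F -> int) x : integral v x = Iv v (Some 0%N) x.
Proof. by []. Qed.

Lemma IvM p (F : fieldType) (v : F -> int) lvl x y : padic_valuation p v ->
  integral v x -> Iv v lvl y -> Iv v lvl (x * y).
Proof.
move=> hv; case: lvl => [r|] /=; last by move=> _ /eqP->; rewrite mulr0.
have [->|x0] := eqVneq x 0; first by rewrite mul0r eqxx.
have [->|y0] := eqVneq y 0; first by rewrite mulr0 eqxx.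
rewrite /integral /= (pv_mul hv x0 y0) => hx hy.
rewrite mulf_eq0 (negPf x0) (negPf y0) /=; move: hx; rewrite (negPf x0) /= => hx; by rewrite -[r%:Z]add0r lerD.
Qed.

Lemma IvMr p (F : fieldType) (v : F -> int) lvl x y : padic_valuation p v ->
  Iv v lvl x -> integral v y -> Iv v lvl (x * y).
Proof. by move=> hv hx hy; rewrite mulrC; apply: (IvM hv). Qed.

Lemma Iv_sum p (F : fieldType) (v : F -> int) lvl (I : finType) (f : I -> F) :
  padic_valuation p v -> (forall i, Iv v lvl (f i)) -> Iv v lvl (\sum_i f i).
Proof.
move=> hv hf; apply: (big_ind (Iv v lvl)); [exact: Iv0 | |by []].
by move=> a b; apply: IvD hv.
Qed.

Lemma int1 p (F : fieldType) (v : F -> int) : padic_valuation p v -> integral v 1.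
Proof. by move=> hv; rewrite /integral (v1 hv) lexx orbT. Qed.

Lemma intM p (F : fieldType) (v : F -> int) x y : padic_valuation p v ->
  integral v x -> integral v y -> integral v (x * y).
Proof. by move=> hv hx hy; apply: (@IvM _ _ _ (Some 0%N) _ _ hv hx hy). Qed.

Lemma int_prod p (F : fieldType) (v : F -> int) (I : finType) (f : I -> F) :
  padic_valuation p v -> (forall i, integral v (f i)) -> integral v (\prod_i f i).
Proof.
move=> hv hf; apply: (big_ind (integral v)); [exact: int1 hv | |by []].
by move=> a b; apply: intM hv.
Qed.

Lemma int_det p (F : fieldType) (v : F -> int) n (M : 'M[F]_n) : padic_valuation p v ->
  (forall i j, integral v (M i j)) -> integral v (\det M).
Proof.
move=> hv hM; rewrite /determinant integralE; apply (big_ind (Iv v (Some 0%N))); [exact: Iv0| by move=> a b; apply (IvD hv) | move=> s _].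
apply (intM hv); last by apply (int_prod hv).
rewrite -signr_odd; case: (perm.odd_perm s); rewrite /= ?expr1 ?expr0;
  last exact: int1 hv.
by rewrite integralE; apply (IvN hv); apply (int1 hv).
Qed.

Lemma GLnO_unit (F : fieldType) (v : F -> int) n (g : 'M[F]_n) : GLnO v g -> g \in unitmx.
Proof. by case/andP=> /andP[_ h] _; rewrite unitmxE unitfE. Qed.

Lemma GLnO_int (F : fieldType) (v : F -> int) n (g : 'M[F]_n) : GLnO v g -> forall i j, integral v (g i j).
Proof. by case/andP=> /andP[/forallP h _] _ i j; have /forallP := h i; apply. Qed.

Lemma GLnOP (F : fieldType) (v : F -> int) n (g : 'M[F]_n) :
  GLnO v g <-> [/\ forall i j, integral v (g i j), \det g != 0 & v (\det g) = 0].
Proof.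
split; first by move=> h; split; [exact: GLnO_int|by case/andP: h => /andP[]|by case/andP: h => _ /eqP].
case=> h1 h2 h3; rewrite /GLnO h2 h3 eqxx andbT andbT.
by apply/forallP=> i; apply/forallP=> j; apply: h1.
Qed.

Lemma int_mul p (F : fieldType) (v : F -> int) n (g h : 'M[F]_n) : padic_valuation p v ->
  (forall i j, integral v (g i j)) -> (forall i j, integral v (h i j)) ->
  forall i j, integral v ((g *m h) i j).
Proof.
move=> hv hg hh i j; rewrite !mxE integralE.
apply (big_ind (Iv v (Some 0%N))); [exact: Iv0| by move=> a b; apply (IvD hv) | move=> k _].
exact: (intM hv).
Qed.

Lemma GLnO_mul p (F : fieldType) (v : F -> int) n (g h : 'M[F]_n) : padic_valuation p v ->
  GLnO v g -> GLnO v h -> GLnO v (g *m h).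
Proof.
move=> hv /GLnOP[g1 g2 g3] /GLnOP[h1 h2 h3]; apply/GLnOP; split.
- exact: (int_mul hv).
- by rewrite det_mulmx mulf_neq0.
- by rewrite det_mulmx (pv_mul hv g2 h2) g3 h3.
Qed.

Lemma vinv p (F : fieldType) (v : F -> int) x : padic_valuation p v -> x != 0 -> v x^-1 = - v x.
Proof.
move=> hv x0; have xi0 : x^-1 != 0 by rewrite invr_eq0.
have := pv_mul hv x0 xi0; rewrite mulfV // (v1 hv) => /eqP.
by rewrite eq_sym addrC addr_eq0 => /eqP.
Qed.

Lemma GLnO_inv p (F : fieldType) (v : F -> int) n (g : 'M[F]_n) : padic_valuation p v ->
  GLnO v g -> GLnO v (invmx g).
Proof.
move=> hv hg; have gu := GLnO_unit hg; move/GLnOP: hg => [g1 g2 g3]; apply/GLnOP; split.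
- move=> i j; rewrite /invmx gu !mxE; apply (intM hv).
    by rewrite /integral (vinv hv g2) g3 oppr0 lexx orbT.
  rewrite /cofactor; apply (intM hv).
    rewrite -signr_odd; case: (odd _); rewrite /= ?expr1 ?expr0; last exact: int1 hv.
    by rewrite integralE; apply (IvN hv); apply (int1 hv).
  by apply (int_det hv) => a b; rewrite !mxE.
- by rewrite det_inv invr_eq0.
- by rewrite det_inv (vinv hv g2) g3 oppr0.
Qed.

Lemma GLnO_1 p (F : fieldType) (v : F -> int) n : padic_valuation p v -> GLnO v (1%:M : 'M[F]_n).
Proof.
move=> hv; apply/GLnOP; split.
- move=> i j; rewrite !mxE; case: (i == j); [exact: int1 hv | by rewrite /integral eqxx].
- by rewrite det1 oner_neq0.
- by rewrite det1 (v1 hv).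
Qed.

Definition LR (F : fieldType) (v : F -> int) n lvl (g : 'M[F]_n) : Prop :=
  forall i j : 'I_n, i.+1 == n -> Iv v lvl (g i j - (j.+1 == n)%:R).

Lemma U1P (F : fieldType) (v : F -> int) n lvl (g : 'M[F]_n) :
  U1 v lvl g <-> GLnO v g /\ LR v lvl g.
Proof.
rewrite /U1 /LR; case: lvl => [r|]; split.
- case/andP=> h1 /forallP h2; split=> // i j hi; have /forallP/(_ j) := h2 i.
  by rewrite hi.
- case=> h1 h2; rewrite h1 /=; apply/forallP=> i; apply/forallP=> j; apply/implyP=> hi.
  exact: h2.
- case/andP=> h1 /forallP h2; split=> // i j hi; have /forallP/(_ j) := h2 i.
  by rewrite hi /= subr_eq0.
- case=> h1 h2; rewrite h1 /=; apply/forallP=> i; apply/forallP=> j; apply/implyP=> hi.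
  by rewrite -subr_eq0; apply: h2.
Qed.

Lemma last_eq n (i k : 'I_n) : i.+1 == n -> (i == k) = (k.+1 == n).
Proof.
move=> /eqP hi; apply/eqP/eqP => [<-//|hk]; apply: val_inj => /=.
by apply/eqP; rewrite -eqSS hi hk.
Qed.

Lemma LR_decomp (F : fieldType) n (g : 'M[F]_n) (i : 'I_n) k : i.+1 == n ->
  g i k - (k.+1 == n)%:R = (g - 1%:M) i k.
Proof. by move=> hi; rewrite !mxE (last_eq k hi). Qed.

Lemma LR_mul p (F : fieldType) (v : F -> int) n lvl (g h : 'M[F]_n) : padic_valuation p v ->
  LR v lvl g -> LR v lvl h -> (forall i j, integral v (h i j)) -> LR v lvl (g *m h).
Proof.
move=> hv hg hh hi i m him.
have -> : g *m h = (g - 1%:M) *m h + h by rewrite mulmxBl mul1mx subrK.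
rewrite mxE -addrA; apply (IvD hv); last exact: hh.
rewrite mxE; apply (big_ind (Iv v lvl)); [exact: Iv0| by move=> a b; apply (IvD hv) | move=> k _].
by apply (IvMr hv); [rewrite -(LR_decomp _ _ him); apply: hg|apply: hi].
Qed.

Lemma LR_inv p (F : fieldType) (v : F -> int) n lvl (g : 'M[F]_n) : padic_valuation p v ->
  g \in unitmx -> LR v lvl g -> (forall i j, integral v (invmx g i j)) -> LR v lvl (invmx g).
Proof.
move=> hv gu hg hi i m him.
have -> : (invmx g) i m - (m.+1 == n)%:R = - ((g - 1%:M) *m invmx g) i m.
  by rewrite mulmxBl mulmxV // mul1mx !mxE (last_eq m him) opprB.
apply (IvN hv); rewrite mxE.
apply (big_ind (Iv v lvl)); [exact: Iv0| by move=> a b; apply (IvD hv) | move=> k _].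
by apply (IvMr hv); [rewrite -(LR_decomp _ _ him); apply: hg|apply: hi].
Qed.

Lemma LR_1 (F : fieldType) (v : F -> int) n lvl : LR v lvl (1%:M : 'M[F]_n).
Proof. by move=> i j hi; rewrite mxE (last_eq j hi) subrr; apply: Iv0. Qed.

Lemma U1_mul p (F : fieldType) (v : F -> int) n lvl (g h : 'M[F]_n) : padic_valuation p v ->
  U1 v lvl g -> U1 v lvl h -> U1 v lvl (g *m h).
Proof.
move=> hv /U1P[g1 g2] /U1P[h1 h2]; apply/U1P; split; first exact: GLnO_mul hv g1 h1.
by apply: (LR_mul hv g2 h2); apply: GLnO_int.
Qed.

Lemma U1_inv p (F : fieldType) (v : F -> int) n lvl (g : 'M[F]_n) : padic_valuation p v ->
  U1 v lvl g -> U1 v lvl (invmx g).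
Proof.
move=> hv /U1P[g1 g2]; apply/U1P; split; first exact: GLnO_inv hv g1.
apply: (LR_inv hv (GLnO_unit g1) g2); apply: GLnO_int; exact: GLnO_inv hv g1.
Qed.

Lemma U1_1 p (F : fieldType) (v : F -> int) n lvl : padic_valuation p v ->
  U1 v lvl (1%:M : 'M[F]_n).
Proof. by move=> hv; apply/U1P; split; [exact: GLnO_1 hv| exact: LR_1]. Qed.

Lemma Iv_mono (F : fieldType) (v : F -> int) (r : nat) (s : option nat) x :
  (match s with Some s' => (r <= s')%N | None => true end) -> Iv v s x -> Iv v (Some r) x.
Proof.
case: s => [s'|] /= hrs; last by move=> ->.
case/orP=> [->//|h]; apply/orP; right; apply: le_trans h; by rewrite lez_nat.
Qed.

Lemma U1_mono (F : fieldType) (v : F -> int) n (r : nat) (s : option nat) (g : 'M[F]_n) :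
  (match s with Some s' => (r <= s')%N | None => true end) -> U1 v s g -> U1 v (Some r) g.
Proof.
move=> hrs /U1P[g1 g2]; apply/U1P; split=> // i j hi; apply: Iv_mono hrs _; exact: g2.
Qed.
Lemma sum_reindex (T : eqType) (W : nmodType) (x0 : T) (f : T -> W) (R : T -> T -> bool) (bs bc : seq T) :
 uniq bs -> uniq bc ->
 (forall b, b \in bs -> exists2 c, c \in bc & R c b) ->
 (forall c, c \in bc -> exists2 b, b \in bs & R c b) ->
 (forall c c' b, c \in bc -> c' \in bc -> b \in bs -> R c b -> R c' b -> c = c') ->
 (forall b b' c, b \in bs -> b' \in bs -> c \in bc -> R c b -> R c b' -> b = b') ->
 (forall c b, c \in bc -> b \in bs -> R c b -> f c = f b) ->
 \sum_(b <- bs) f b = \sum_(c <- bc) f c.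
Proof.
move=> ubs ubc cov sur uc ub hf.
pose sg b := nth x0 bc (find (R ^~ b) bc).
have sgP b : b \in bs -> sg b \in bc /\ R (sg b) b.
  move=> bin; have [c cin hc] := cov b bin.
  have hh : has (R ^~ b) bc by apply/hasP; exists c.
  by split; [apply: mem_nth; rewrite -has_find | exact: (nth_find x0 hh)].
have -> : \sum_(b <- bs) f b = \sum_(b <- bs) f (sg b).
  by apply: eq_big_seq => b bin; have [h1 h2] := sgP b bin; rewrite (hf _ _ h1 bin h2).
rewrite -(big_map sg xpredT f); apply: perm_big; apply: uniq_perm.
- rewrite map_inj_in_uniq // => b b' bin b'in e.
  have [h1 h2] := sgP b bin; have [h1' h2'] := sgP b' b'in.
  by apply: (ub _ _ (sg b) bin b'in h1 h2); rewrite e.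
- exact: ubc.
- move=> c; apply/mapP/idP => [[b bin ->]|cin]; first by case: (sgP b bin).
  have [b bin hb] := sur c cin; exists b => //.
  have [h1 h2] := sgP b bin; exact: (uc _ _ b cin h1 bin hb h2).
Qed.

Lemma invmx_eq (F : fieldType) n (A B : 'M[F]_n) : B *m A = 1%:M -> invmx A = B.
Proof.
move=> h; have [Bu Au] := mulmx1_unit h.
by rewrite -[invmx A]mul1mx -h -mulmxA mulmxV // mulmx1.
Qed.

Definition dinv (F : fieldType) n (w : F) j : 'rV[F]_n := \row_(i < n) (if (i < j)%N then w^-1 else 1).

Lemma dinv_alpha (F : fieldType) n (w : F) j : w != 0 -> diag_mx (dinv n w j) *m alpha n w j = 1%:M.
Proof.
move=> w0; apply/matrixP=> a b.
rewrite /alpha mul_diag_mx !mxE; case: (a == b); rewrite ?mulr1n ?mulr0n ?mulr0 //.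
by case: ifP => _; rewrite ?mulVf // mulr1.
Qed.

Lemma alpha_inv (F : fieldType) n (w : F) j : w != 0 -> invmx (alpha n w j) = diag_mx (dinv n w j).
Proof. by move=> w0; apply: invmx_eq; apply: dinv_alpha. Qed.

Lemma alpha_unit (F : fieldType) n (w : F) j : w != 0 -> alpha n w j \in unitmx.
Proof. by move=> w0; case: (mulmx1_unit (dinv_alpha n j w0)). Qed.

Lemma inv_alpha_last (F : fieldType) n (w : F) j (X : 'M[F]_n) (i k : 'I_n) : w != 0 -> (j < n)%N ->
  i.+1 == n -> (invmx (alpha n w j) *m X) i k = X i k.
Proof.
move=> w0 jn /eqP hi; rewrite alpha_inv // mul_diag_mx !mxE.
have -> : (i < j)%N = false by apply/negbTE; rewrite -leqNgt -ltnS hi.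
by rewrite mul1r.
Qed.

Lemma mul_alpha (F : fieldType) n (w : F) j (X : 'M[F]_n) (a b : 'I_n) :
  (X *m alpha n w j) a b = X a b * (if (b < j)%N then w else 1).
Proof. by rewrite /alpha mul_mx_diag !mxE. Qed.

Lemma LR_alpha p (F : fieldType) (v : F -> int) n lvl (w : F) j (X : 'M[F]_n) :
  padic_valuation p v -> integral v w -> (j < n)%N -> LR v lvl X -> LR v lvl (X *m alpha n w j).
Proof.
move=> hv hw jn hX a b ha; rewrite mul_alpha; case: ifP => hb; last first.
  by rewrite mulr1; apply: hX.
have hb' : (b.+1 == n) = false by apply/negbTE; rewrite neq_ltn (leq_ltn_trans hb jn).
have := hX a b ha; rewrite hb' subr0 => h; rewrite subr0; apply: (IvMr hv h hw).
Qed.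

Definition Lmat (F : fieldType) n (u : 'M[F]_n) : 'M[F]_n :=
  \matrix_(a, b) (if a.+1 == n then u a b else (a == b)%:R).

Lemma v_unit1 p (F : fieldType) (v : F -> int) r z : padic_valuation p v -> (0 < r)%N ->
  Iv v (Some r) (z - 1) -> z != 0 /\ v z = 0.
Proof.
move=> hv r0 /=; have [e|y0] := eqVneq (z - 1) 0.
  by move/eqP: e; rewrite subr_eq0 => /eqP ->; rewrite oner_neq0 (v1 hv).
rewrite /= => hy; have hy1 : 1 <= v (z - 1) by apply: le_trans hy; rewrite lez_nat.
have z0 : z != 0.
  apply/eqP=> e; move: hy1; rewrite e sub0r (vN _ hv) (v1 hv) //.
split=> //.
have hz : 0 <= v z.
  have := pv_add hv (oner_neq0 F) y0; rewrite addrC subrK => /(_ z0).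
  by rewrite (v1 hv); apply: le_trans; rewrite le_min lexx (le_trans _ hy1).
apply/eqP; rewrite eq_le hz andbT; rewrite leNgt; apply/negP => hzp.
have ny0 : - (z - 1) != 0 by rewrite oppr_eq0.
have e : z + - (z - 1) = 1 by rewrite opprB addrC subrK.
have := pv_add hv z0 ny0; rewrite e oner_neq0 => /(_ isT).
rewrite (v1 hv) (vN _ hv) ge_min => /orP[h1|h1].
  by move: (lt_le_trans hzp h1); rewrite ltxx.
by move: (le_trans hy1 h1).
Qed.

Lemma Lmat_U p (F : fieldType) (v : F -> int) n r (u : 'M[F]_n) : padic_valuation p v -> (0 < r)%N ->
  (forall a b, integral v (u a b)) -> LR v (Some r) u -> U1 v (Some r) (Lmat u).
Proof.
move=> hv r0 hu hL; apply/U1P; split; last first.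
  by move=> a b ha; rewrite mxE ha; apply: hL.
have tr : is_trig_mx (Lmat u).
  apply/is_trig_mxP=> a b ab; rewrite mxE.
  have -> : (a.+1 == n) = false.
    by apply/negbTE; rewrite neq_ltn (leq_ltn_trans ab (ltn_ord b)).
  by have -> : (a == b) = false by apply/negbTE; rewrite neq_ltn ab.
have hd : (\det (Lmat u) != 0) && (v (\det (Lmat u)) == 0).
  rewrite (det_trig tr); apply: (big_ind (fun x => (x != 0) && (v x == 0))).
  - by rewrite oner_neq0 (v1 hv) eqxx.
  - move=> x y /andP[x0 /eqP vx] /andP[y0 /eqP vy].
    by rewrite mulf_neq0 // (pv_mul hv x0 y0) vx vy addr0 eqxx.
  - move=> a _; rewrite mxE eqxx; case: ifP => ha; last by rewrite oner_neq0 (v1 hv) eqxx.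
    have := hL a a ha; rewrite ha => h; have [z0 vz] := v_unit1 hv r0 h.
    by rewrite z0 vz eqxx.
case/andP: hd => d0 /eqP vd; apply/GLnOP; split=> // a b; rewrite mxE.
case: ifP => _; first exact: hu.
by case: (a == b); [exact: int1 hv | rewrite /integral eqxx].
Qed.

Lemma conj_Lmat (F : fieldType) n (w : F) j (u : 'M[F]_n) : w != 0 -> (j < n)%N ->
  invmx (alpha n w j) *m Lmat u *m alpha n w j = Lmat (u *m alpha n w j).
Proof.
move=> w0 jn; apply/matrixP=> a b; rewrite mul_alpha [RHS]mxE mul_alpha.
rewrite alpha_inv // mul_diag_mx !mxE.
case: (boolP (a.+1 == n)) => ha.
  have -> : (a < j)%N = false.
    by apply/negbTE; rewrite -leqNgt -ltnS (eqP ha).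
  by rewrite mul1r.
have [<-|nab] := eqVneq a b; last by rewrite mulr0n mulr0 mul0r.
by case: ifP => _; rewrite mulr1 ?mulVf // mul1r.
Qed.

Lemma Lmat_split (F : fieldType) (v : F -> int) n (u : 'M[F]_n) : Lmat u \in unitmx ->
  LR v None (u *m invmx (Lmat u)).
Proof.
move=> Lu i m hi; rewrite /Iv subr_eq0.
have -> : (u *m invmx (Lmat u)) i m = (Lmat u *m invmx (Lmat u)) i m.
  by rewrite !mxE; apply: eq_bigr => k _; rewrite mxE hi.
by rewrite mulmxV // mxE (last_eq m hi).
Qed.

Lemma inv_prod (F : fieldType) n (b c : 'M[F]_n) : b \in unitmx -> c \in unitmx ->
  invmx (invmx c *m b) = invmx b *m c.
Proof.
move=> bu cu; apply: invmx_eq.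
by rewrite mulmxA mulmxK // mulVmx.
Qed.

Lemma chain (F : fieldType) n (X b Y : 'M[F]_n) : b \in unitmx ->
  (X *m b) *m (invmx b *m Y) = X *m Y.
Proof. by move=> bu; rewrite mulmxA mulmxK. Qed.

Lemma U1_none_sub (F : fieldType) (v : F -> int) n s (g : 'M[F]_n) :
  U1 v None g -> U1 v s g.
Proof.
move=> /U1P[g1 g2]; apply/U1P; split=> // i j hi; have := g2 i j hi.
by rewrite /= => /eqP ->; apply: Iv0.
Qed.

Lemma U1_unit (F : fieldType) (v : F -> int) n lvl (g : 'M[F]_n) : U1 v lvl g -> g \in unitmx.
Proof. by move=> /U1P[g1 _]; exact: (GLnO_unit g1). Qed.

Lemma dc_unit (F : fieldType) (v : F -> int) n lvl (a g : 'M[F]_n) : a \in unitmx ->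
  in_dcoset (U1 v lvl) a g -> g \in unitmx.
Proof.
move=> au [u1 [u2 [h1 [h2 ->]]]].
by rewrite !unitmx_mul au (U1_unit h1) (U1_unit h2).
Qed.

Lemma distinct_eq (F : fieldType) (v : F -> int) n lvl (bs : seq 'M[F]_n) :
  (forall i k, (i < size bs)%N -> (k < size bs)%N -> i <> k ->
        ~ U1 v lvl (invmx (nth 0 bs i) *m nth 0 bs k)) ->
  forall c c', c \in bs -> c' \in bs -> U1 v lvl (invmx c *m c') -> c = c'.
Proof.
move=> hd c c' cin c'in hU.
have [e|ne] := eqVneq (index c bs) (index c' bs).
  by rewrite -(nth_index 0 cin) -(nth_index 0 c'in) e.
exfalso; apply: (hd (index c bs) (index c' bs)); rewrite ?index_mem //.
  by apply/eqP.
by rewrite !nth_index.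
Qed.

Lemma reps_uniq p (F : fieldType) (v : F -> int) n lvl (a : 'M[F]_n) (bs : seq 'M[F]_n) :
  padic_valuation p v -> a \in unitmx -> dcoset_reps (U1 v lvl) a bs -> uniq bs.
Proof.
move=> hv au [hin _ hd]; apply/contraT; move/(uniqPn (0 : 'M[F]_n)) => [i [k [ik ks e]]].
have ne : i <> k by move=> e'; rewrite e' ltnn in ik.
case: (hd i k (ltn_trans ik ks) ks ne); rewrite e mulVmx; first exact: U1_1 hv.
by apply: (dc_unit au); apply: hin; apply: mem_nth.
Qed.

Unset Implicit Arguments.
Set Strict Implicit.

Theorem lemma2
  (p : nat) (F : fieldType) (vF : F -> int) (w : F) (q : nat)
  (l : nat) (K : fieldType) (vK : K -> int)
  (n : nat) (A : comPzRingType) (phi : K -> A) (V : lmodType A) (rho : 'M[F]_n -> V -> V)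
  (r : nat) (s : option nat) :
  padic_valuation p vF -> w != 0 -> vF w = 1 -> residue_card vF q ->
  padic_valuation l vK -> l <> p ->
  ~~ (l %| gl_order n q)%N ->
  (0 < n)%N ->
  O_algebra_map vK phi ->
  is_rep rho -> smooth vF rho ->
  (0 < r)%N -> (match s with Some s' => (r <= s')%N | None => true end) ->
  (* the inclusion V^{U_1(w^r)} ⊂ V^{U_1(w^s)} *)
  (forall x : V, fixed_by rho (U1 vF (Some r)) x -> fixed_by rho (U1 vF s) x)
  /\
  (* it commutes with U^(j) = [U α_j U] for j = 1, ..., n-1 (A[X]-linearity) *)
  (forall (j : nat) (bs_r bs_s : seq 'M[F]_n), (1 <= j)%N -> (j < n)%N ->
     dcoset_reps (U1 vF (Some r)) (alpha n w j) bs_r ->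
     dcoset_reps (U1 vF s) (alpha n w j) bs_s ->
     forall x : V, fixed_by rho (U1 vF (Some r)) x -> hecke rho bs_r x = hecke rho bs_s x)
  /\
  (* torsion freeness of V^{U_1(w^s)} / V^{U_1(w^r)} *)
  (torsion_free V ->
     forall (a : A) (x : V), fixed_by rho (U1 vF s) x ->
       fixed_by rho (U1 vF (Some r)) (a *: x) ->
       fixed_by rho (U1 vF (Some r)) x \/ zero_divisor a).
Proof.
move=> hv w0 vw _ _ _ _ n0 _ hrep _ r0 hrs.
have hw : integral vF w by rewrite /integral vw orbT.
case: hrep => hlin hid hmul.
have rho0 : forall g, GLn g -> rho g 0 = 0.
  move=> g hg; have := hlin g hg 1 0 0; rewrite !scale1r addr0.
  by move/(congr1 (fun z => z - rho g 0)); rewrite subrr addrK => e; exact: esym e.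
have rhoZ : forall g, GLn g -> forall a x, rho g (a *: x) = a *: rho g x.
  by move=> g hg a x; rewrite -[a *: x]addr0 hlin // rho0 // addr0.
have Usr : forall g : 'M[F]_n, U1 vF s g -> U1 vF (Some r) g by move=> g; exact: (U1_mono hrs).
split; [|split].
- by move=> x hx g hg; apply: hx; apply: Usr.
- move=> j bs_r bs_s j1 jn hr hs x hx.
  have alu : alpha n w j \in unitmx by apply: alpha_unit.
  have ur := reps_uniq hv alu hr; have us := reps_uniq hv alu hs.
  case: hr => [rin rcov rdis]; case: hs => [sin scov sdis].
  have rd := distinct_eq rdis; have sd := distinct_eq sdis.
  have sunit : forall b, b \in bs_s -> b \in unitmx by move=> b /sin; apply: dc_unit.
  have runit : forall b, b \in bs_r -> b \in unitmx by move=> b /rin; apply: dc_unit.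
  rewrite /hecke; symmetry.
  eapply (@sum_reindex _ V (0 : 'M[F]_n) (fun b => rho b x)
           (fun c b => U1 vF (Some r) (invmx c *m b))) => //.
  +
    move=> b bin; apply: rcov; have [u1 [u2 [h1 [h2 ->]]]] := sin b bin.
    by exists u1, u2; split; [apply: Usr|split; [apply: Usr|]].
  +
    move=> c cin; have [u1 [u2 [h1 [h2 ec]]]] := rin c cin.
    move/U1P: (h1) => [u1G u1L]; have u1i := GLnO_int u1G.
    have kU : U1 vF (Some r) (Lmat u1) := Lmat_U hv r0 u1i u1L.
    have ku := U1_unit kU.
    pose h := u1 *m invmx (Lmat u1).
    have hUr : U1 vF (Some r) h := U1_mul hv h1 (U1_inv hv kU).
    have hUs : U1 vF s h.
      apply: U1_none_sub; apply/U1P; split; first by case/U1P: hUr.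
      exact: (Lmat_split vF ku).
    pose g := h *m alpha n w j *m 1%:M.
    have gdc : in_dcoset (U1 vF s) (alpha n w j) g.
      by exists h, 1%:M; split=> //; split=> //; exact: U1_1 hv.
    have gu : g \in unitmx := dc_unit alu gdc.
    have [b bin hb] := scov g gdc.
    exists b => //.
    pose N := Lmat (u1 *m alpha n w j).
    have NU : U1 vF (Some r) N.
      apply: (Lmat_U hv r0); last exact: (LR_alpha hv hw jn u1L).
      move=> a b'; rewrite mul_alpha; apply: (intM hv (u1i a b')).
      by case: ifP => _ //; exact: int1 hv.
    have ecN : c = g *m (N *m u2).
      rewrite ec /g /N -conj_Lmat // /h !mulmxA mulmx1 (mulmxK alu) (mulmxKV ku) //.
    have hgc : U1 vF (Some r) (invmx g *m c).
      by rewrite ecN mulKmx //; apply: (U1_mul hv NU h2).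
    have hbc : U1 vF (Some r) (invmx b *m c).
      rewrite -(chain _ _ gu); apply: (U1_mul hv (Usr _ hb) hgc).
    have bu := sunit b bin; have cu := runit c cin.
    by rewrite -(inv_prod cu bu); exact: (U1_inv hv hbc).
  +
    move=> c c' b cin c'in bin h1 h2; apply: rd => //.
    rewrite -(chain _ _ (sunit b bin)) -(inv_prod (sunit b bin) (runit c' c'in)).
    by apply: (U1_mul hv h1); apply: (U1_inv hv).
  +
    move=> b b' c bin b'in cin h1 h2.
    apply: sd => //.
    have hX : U1 vF (Some r) (invmx b *m b').
      rewrite -(chain _ _ (runit c cin)) -(inv_prod (sunit b bin) (runit c cin)).
      exact: (U1_mul hv (U1_inv hv h1) h2).
    have [u1 [u2 [g1 [g2 eb]]]] := sin b bin.
    have [u1' [u2' [g1' [g2' eb']]]] := sin b' b'in.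
    have u1u := U1_unit g1; have u2u := U1_unit g2; have u2'u := U1_unit g2'.
    pose m := invmx u1 *m u1'.
    have mU : U1 vF s m := U1_mul hv (U1_inv hv g1) g1'.
    pose M := invmx (alpha n w j) *m m *m alpha n w j.
    have eX : invmx b *m b' = invmx u2 *m M *m u2'.
      have e : b' = b *m (invmx u2 *m M *m u2').
        by rewrite eb eb' /M /m !mulmxA (mulmxK u2u) (mulmxK alu) (mulmxV u1u) mul1mx.
      by rewrite e mulKmx // (sunit b bin).
    have hM : U1 vF (Some r) M.
      have -> : M = u2 *m (invmx b *m b') *m invmx u2'.
        by rewrite eX mulmxA (mulmxK u2'u) (mulKVmx u2u).
      exact: (U1_mul hv (U1_mul hv (Usr _ g2) hX) (U1_inv hv (Usr _ g2'))).
    have hMs : U1 vF s M.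
      apply/U1P; split; first by case/U1P: hM.
      move=> i k hi; rewrite /M -mulmxA inv_alpha_last //.
      by apply: (LR_alpha hv hw jn); [case/U1P: mU|].
    rewrite eX; exact: (U1_mul hv (U1_mul hv (U1_inv hv g2) hMs) g2').
  +
    move=> c b cin bin hcb.
    rewrite -(mulKVmx (runit c cin) b) hmul; first by rewrite (hx _ hcb).
      exact: (runit c cin).
    exact: (U1_unit hcb).
- move=> tf a x hxs hax.
  have [za|nza] := classic (zero_divisor a); [by right| left].
  move=> g hg; have hG : GLn g := U1_unit hg.
  have : a *: (rho g x - x) = 0 by rewrite scalerBr -rhoZ // hax // subrr.
  by case/tf => [e|//]; apply/eqP; rewrite -subr_eq0 e.
Qed.
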